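(* Let $G$ be a finite group and $p$ a prime dividing $|G|$. If $\mathcal{A}_p(G)\subseteq\mathcal{S}_p(G)$ is a strong deformation retract, then both $\mathcal{A}_p(G)'/G$ and $\mathcal{S}_p(G)'/G$ are contractible finite spaces. In particular, this holds when the Sylow $p$-subgroups of $G$ are abelian. Moreover, in the latter case $\mathcal{B}_p(G)\subseteq\mathcal{S}_p(G)$ is a strong deformation retract and $\mathcal{B}_p(G)'/G$ is a contractible finite space.
   Context: $\mathcal{S}_p(G)$ is the poset of non-trivial $p$-subgroups of $G$, $\mathcal{A}_p(G)$ its subposet of non-trivial elementary abelian $p$-subgroups, and $\mathcal{B}_p(G)=\{P\in\mathcal{S}_p(G):P=\mathcal{O}_p(N_G(P))\}$ the $p$-radical subgroups ($\mathcal{O}_p(H)$ = largest normal $p$-subgroup of $H$). $G$ acts by conjugation. Finite posets are finite $T_0$ spaces with open sets the down-sets; contractibility and strong deformation retracts refer to this topology. For a poset $X$, $X'$ is the poset of non-empty chains ordered by inclusion, with $G$ acting componentwise; $X'/G$ is the orbit poset with $\overline{c}\le\overline{d}$ iff some representatives satisfy $c_1\subseteq d_1$. *)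

(* Defs.v *)
From HB Require Import structures.
From mathcomp Require Import all_boot all_order all_algebra.
From mathcomp Require Import boolp classical_sets topology reals.
From mathcomp Require Import Rstruct Rstruct_topology.
From mathcomp Require Import all_fingroup all_solvable.
From Stdlib Require Import Rdefinitions.
Import Order.TTheory GRing.Theory Num.Theory.

Set Implicit Arguments.
Unset Strict Implicit.
Unset Printing Implicit Defensive.

Local Open Scope classical_set_scope.

(* A finite poset is given as a subset S of a finite type T together with    *)
(* an order relation le on T (restricted to S).  The associated finite      *)
(* space has carrier the elements of S and open sets the down-sets.         *)

(* the carrier; le is a (phantom) parameter, the topology depends on it *)
Definition finspace (T : finType) (le : rel T) (S : {set T}) : Type :=
  {x : T | x \in S}.

Section FinSpace.
Variables (T : finType) (le : rel T) (S : {set T}).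
Local Notation finspace := (finspace le S).
HB.instance Definition _ := Choice.on finspace.

Definition downset_open : set_system finspace :=
  [set U | forall x y : finspace, le (val x) (val y) -> U y -> U x].

Lemma downset_openT : downset_open setT.
Proof. by []. Qed.

Lemma downset_openI : setI_closed downset_open.
Proof. by move=> A B hA hB x y lexy [Ay By]; split; [exact: hA lexy Ay|exact: hB lexy By]. Qed.

Lemma downset_open_bigU (I : Type) (f : I -> set finspace) :
  (forall i, downset_open (f i)) -> downset_open (\bigcup_i f i).
Proof. by move=> hf x y lexy [i _ fiy]; exists i => //; exact: hf lexy fiy. Qed.

HB.instance Definition _ := isOpenTopological.Build finspace
  downset_openT downset_openI downset_open_bigU.

End FinSpace.

Definition unit_itv : set R := [set t : R | (0 <= t <= 1)%R].

Definition contractible (X : topologicalType) : Prop :=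
  exists (x0 : X) (H : (X * R)%type -> X),
    [/\ {within [set: X] `*` unit_itv, continuous H},
        (forall x, H (x, 0%R) = x) &
        (forall x, H (x, 1%R) = x0)].

Definition strong_deformation_retract (X : topologicalType) (A : set X) : Prop :=
  exists H : (X * R)%type -> X,
    [/\ {within [set: X] `*` unit_itv, continuous H},
        (forall x, H (x, 0%R) = x),
        (forall x, A (H (x, 1%R))) &
        (forall a t, A a -> unit_itv t -> H (a, t) = a)].

Section SubgroupPosets.
Local Close Scope classical_set_scope.
Local Open Scope group_scope.
Variables (gT : finGroupType) (p : nat) (G : {group gT}).

Definition Sp : {set {group gT}} :=
  [set H : {group gT} | [&& H \subset G, p.-group H & H :!=: 1]].

Definition Ap : {set {group gT}} :=
  [set H : {group gT} | [&& H \subset G, p.-abelem H & H :!=: 1]].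

Definition Bp : {set {group gT}} :=
  [set H : {group gT} in Sp | H :==: 'O_p('N_G(H))].

Definition sub_le : rel {group gT} := fun H K => H \subset K.

End SubgroupPosets.

(* The poset of non-empty chains X' and the orbit poset X'/G for a poset    *)
(* X of subgroups (ordered by inclusion) with G acting by conjugation.      *)

Section ChainOrbits.
Local Close Scope classical_set_scope.
Local Open Scope group_scope.
Variables (gT : finGroupType) (G : {group gT}).

Definition chains (X : {set {group gT}}) : {set {set {group gT}}} :=
  [set c : {set {group gT}} | [&& c != finset.set0, c \subset X &
     [forall H in c, forall K in c, (H \subset K) || (K \subset H)]]].

Definition conj_chain (c : {set {group gT}}) (g : gT) : {set {group gT}} :=
  [set (H :^ g)%G | H in c].

Definition chain_orbit (c : {set {group gT}}) : {set {set {group gT}}} :=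
  [set conj_chain c g | g in G].

Definition orbit_chains (X : {set {group gT}}) : {set {set {set {group gT}}}} :=
  [set chain_orbit c | c in chains X].

Definition orbit_le : rel {set {set {group gT}}} :=
  fun O1 O2 => [exists c in O1, exists d in O2, c \subset d].

Definition orbit_space (X : {set {group gT}}) : topologicalType :=
  finspace orbit_le (orbit_chains X).

End ChainOrbits.

Definition Sp_space (gT : finGroupType) (p : nat) (G : {group gT}) : topologicalType :=
  finspace (@sub_le gT) (Sp p G).

Definition in_space (gT : finGroupType) (p : nat) (G : {group gT})
    (Y : {set {group gT}}) : set (Sp_space p G) :=
  [set x : Sp_space p G | val x \in Y].
Arguments in_space {gT} p G Y.
Arguments Sp_space {gT} p G.
Arguments orbit_space {gT} G X.

(* Main.v *)
Require Import Defs.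
From HB Require Import structures.
From mathcomp Require Import all_boot all_order all_algebra.
From mathcomp Require Import boolp classical_sets topology reals.
From mathcomp Require Import Rstruct Rstruct_topology.
From mathcomp Require Import all_fingroup all_solvable.
From mathcomp Require Import lra.
From Stdlib Require Import Rdefinitions.
From mathcomp Require Import zify.
Import Order.TTheory GRing.Theory Num.Theory.

Set Implicit Arguments.
Unset Strict Implicit.
Unset Printing Implicit Defensive.
Section FinTop.
Local Open Scope classical_set_scope.
Local Open Scope ring_scope.
Variables (T : finType) (le : rel T) (S : {set T}).
Hypothesis le_refl : forall x, x \in S -> le x x.
Hypothesis le_trans : forall x y z, x \in S -> y \in S -> z \in S ->
  le x y -> le y z -> le x z.
Local Notation X := (finspace le S).

Definition dset (x : X) : set X := [set y : X | le (val y) (val x)].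

Lemma dset_open x : open (dset x).
Proof.
change (downset_open (dset x)) => a b /= lab lbx.
exact: le_trans (valP a) (valP b) (valP x) lab lbx.
Qed.

Lemma nbhs_dset (x : X) : nbhs x (dset x).
Proof.
rewrite nbhsE; exists (dset x) => //; split; first exact: dset_open.
exact: le_refl (valP x).
Qed.

Lemma nbhs_down (x : X) W : nbhs x W -> forall y : X, le (val y) (val x) -> W y.
Proof.
rewrite nbhsE => -[B [oB Bx] BW] y lyx; apply: BW; exact: oB lyx Bx.
Qed.

Variable (m : nat) (f : nat -> X -> X).
Hypothesis fmono : forall i x y, le (val x) (val y) -> le (val (f i x)) (val (f i y)).
Hypothesis fcmp : forall (j : nat) (x : X), (j < m)%nat ->
  le (val (f j.*2 x)) (val (f j.*2.+1 x)) /\ le (val (f j.+1.*2 x)) (val (f j.*2.+1 x)).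

Definition cc (j : nat) : R := j.+1%:R * (m.+1%:R)^-1.

Lemma cc_lt i j : (i < j)%nat -> cc i < cc j.
Proof.
move=> ij; rewrite /cc ltr_pM2r ?invr_gt0 ?ltr0Sn // ltr_nat ltnS //.
Qed.

Lemma cc_gt0 i : 0 < cc i.
Proof. by rewrite /cc mulr_gt0 ?invr_gt0 ?ltr0Sn. Qed.

Lemma cc_lt1 i : (i < m)%nat -> cc i < 1.
Proof.
move=> im; rewrite /cc ltr_pdivrMr ?ltr0Sn // mul1r ltr_nat ltnS //.
Qed.

Fixpoint idx (k j : nat) (t : R) : nat :=
  match k with
  | 0 => j.*2
  | k.+1 => if t < cc j then j.*2 else if t == cc j then j.*2.+1
            else idx k j.+1 t
  end.

Lemma idx_lt k j t : t < cc j -> idx k j t = j.*2.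
Proof. by case: k => //= k ->. Qed.

Lemma idx_gt k j t : (forall i, (j <= i < j + k)%nat -> cc i < t) -> idx k j t = (j + k).*2.
Proof.
elim: k j => [|k IH] j h /=; first by rewrite addn0.
have hj : cc j < t by apply: h; rewrite leqnn addnS ltnS leq_addr.
rewrite ltNge (ltW hj) /= gt_eqF // IH ?addSnnS // => i /andP[ji ik].
by apply: h; rewrite ltnW //= -addSnnS.
Qed.

Lemma idx_loc k j t : (j + k <= m)%nat -> exists e : R, 0 < e /\
  forall s : R, `|t - s| < e -> forall x,
    le (val (f (idx k j s) x)) (val (f (idx k j t) x)).
Proof.
elim: k j t => [|k IH] j t jk /=.
  by exists 1; split => // s _ x; exact: le_refl (valP _).
have jm : (j < m)%nat by rewrite -addn1 (leq_trans _ jk) // leq_add2l.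
case: (ltrP t (cc j)) => [tj|jt].
  exists (cc j - t); split; first by rewrite subr_gt0.
  move=> s; rewrite ltr_distlC => /andP[_ hs] x.
  have -> : s < cc j by lra.
  exact: le_refl (valP _).
case: (eqVneq t (cc j)) => [tE|tN].
  exists (cc j.+1 - cc j); split; first by rewrite subr_gt0 cc_lt.
  move=> s; rewrite ltr_distlC => /andP[_ hs] x.
  have [c1 c2] := fcmp x jm.
  case: (ltrP s (cc j)) => [//|js]; case: (eqVneq s (cc j)) => [_|sN].
    exact: le_refl (valP _).
  rewrite idx_lt //; lra.
have tgt : cc j < t by rewrite lt_neqAle eq_sym tN jt.
have := IH j.+1 t; rewrite addSnnS => /(_ jk) [e [e0 he]].
exists (Num.min e (t - cc j)); split.
  by rewrite lt_min e0 subr_gt0.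
move=> s; rewrite lt_min => /andP[hse]; rewrite ltr_distlC => /andP[hs _] x.
have sj : cc j < s by lra.
rewrite ltNge (ltW sj) gt_eqF //=.
exact: he.
Qed.

Definition Hf (z : X * R) : X := f (idx m 0 z.2) z.1.

Lemma Hf_cont : continuous Hf.
Proof.
move=> [x t] W /= hW.
have [e [e0 he]] := @idx_loc m 0 t (leqnn m).
exists (dset x, ball t e); first by split; [exact: nbhs_dset | exact: nbhsx_ballx].
move=> [y s] [/= yx ts].
apply: (nbhs_down hW) => /=; rewrite /Hf /=.
apply: le_trans (valP _) (valP _) (valP _) (fmono _ yx) _.
exact: he.
Qed.

Lemma fence_homotopy : (forall x, f 0 x = x) ->
  exists H : X * R -> X,
    [/\ {within [set: X] `*` unit_itv, continuous H},
        (forall x, H (x, 0) = x),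
        (forall x, H (x, 1) = f m.*2 x) &
        (forall z, exists i, H z = f i z.1)].
Proof.
move=> f0; exists Hf; split.
- exact: continuous_subspaceT Hf_cont.
- by move=> x; rewrite /Hf /= idx_lt ?cc_gt0.
- move=> x; rewrite /Hf /= idx_gt // => i /andP[_ im]; exact: cc_lt1.
- by move=> z; exists (idx m 0 z.2).
Qed.

End FinTop.
Section FinTop2.
Local Open Scope classical_set_scope.
Local Open Scope ring_scope.
Variables (T : finType) (le : rel T) (S : {set T}).
Hypothesis le_refl : forall x, x \in S -> le x x.
Hypothesis le_trans : forall x y z, x \in S -> y \in S -> z \in S ->
  le x y -> le y z -> le x z.
Local Notation X := (finspace le S).

Lemma unit_itv1 : unit_itv 1.
Proof. rewrite /unit_itv /=; split; [exact: RIneq.Rle_0_1 | exact: RIneq.Rle_refl]. Qed.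

Lemma cont_mono (H : X * R -> X) :
  {within [set: X] `*` unit_itv, continuous H} ->
  forall x y : X, le (val x) (val y) -> le (val (H (x, 1))) (val (H (y, 1))).
Proof.
move=> hc x y lxy.
have Ay : ([set: X] `*` unit_itv) (y, 1) by split => //; exact: unit_itv1.
have h : nbhs ((y, 1) : subspace ([set: X] `*` unit_itv))
    [set z | dset (H (y, 1)) (H z)] :=
  hc (y, 1) _ (nbhs_dset le_refl le_trans _).
have h' : within ([set: X] `*` unit_itv) (nbhs ((y, 1%R) : X * R))
    [set z | dset (H (y, 1)) (H z)] by rewrite (nbhs_subspace_in Ay); exact: h.
move: h'; rewrite /within /= => -[[P1 P2] [/= n1 n2] sub].
have := sub (x, 1); apply.
  by split => /=; [exact: nbhs_down n1 _ lxy | exact: nbhs_singleton n2].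
by split => //; exact: unit_itv1.
Qed.

Variable (m : nat) (f : nat -> X -> X).
Hypothesis fmono : forall i x y, le (val x) (val y) -> le (val (f i x)) (val (f i y)).
Hypothesis fcmp : forall (j : nat) (x : X), (j < m)%nat ->
  le (val (f j.*2 x)) (val (f j.*2.+1 x)) /\ le (val (f j.+1.*2 x)) (val (f j.*2.+1 x)).
Hypothesis f0 : forall x, f 0 x = x.

Lemma fence_contractible (x0 : X) : (forall x, f m.*2 x = x0) -> contractible X.
Proof.
move=> fm; have [H [hc h0 h1 _]] := fence_homotopy le_refl le_trans fmono fcmp f0.
by exists x0, H; split => // x; rewrite h1.
Qed.

Lemma fence_sdr (A : set X) : (forall i a, A a -> f i a = a) ->
  (forall x, A (f m.*2 x)) -> strong_deformation_retract A.
Proof.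
move=> fA fm; have [H [hc h0 h1 hr]] := fence_homotopy le_refl le_trans fmono fcmp f0.
exists H; split => //; first by move=> x; rewrite h1.
by move=> a t Aa _; have [i ->] := hr (a, t); exact: fA.
Qed.
End FinTop2.
From mathcomp Require Import eqtype fintype finset fingroup.
Section OrbitBasics.
Local Open Scope group_scope.
Variables (gT : finGroupType) (G : {group gT}).
Implicit Types (c d : {set {group gT}}) (X : {set {group gT}}).

Lemma conjG_group1 (H : {group gT}) : (H :^ 1)%G = H.
Proof. by apply: val_inj; rewrite /= conjsg1. Qed.

Lemma conjG_groupM (H : {group gT}) g h : ((H :^ g) :^ h)%G = (H :^ (g * h))%G.
Proof. by apply: val_inj; rewrite /= conjsgM. Qed.

Lemma conj_chain1 c : conj_chain c 1 = c.
Proof.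
rewrite /conj_chain (eq_imset (g := id)) ?imset_id // => H.
exact: conjG_group1.
Qed.

Lemma conj_chainM c g h : conj_chain (conj_chain c g) h = conj_chain c (g * h).
Proof.
rewrite /conj_chain -imset_comp; apply: eq_imset => H /=.
exact: conjG_groupM.
Qed.

Lemma conj_chainS c d g : c \subset d -> conj_chain c g \subset conj_chain d g.
Proof. exact: imsetS. Qed.

Lemma mem_conj_chain c g (H : {group gT}) : H \in c -> (H :^ g)%G \in conj_chain c g.
Proof. by move=> Hc; apply: imset_f. Qed.

Lemma conj_chainP c g (K : {group gT}) :
  reflect (exists2 H : {group gT}, H \in c & K = (H :^ g)%G) (K \in conj_chain c g).
Proof. exact: imsetP. Qed.

Lemma conj_chainK c g : conj_chain (conj_chain c g) g^-1 = c.
Proof. by rewrite conj_chainM mulgV conj_chain1. Qed.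

Definition Ginv X := forall (H : {group gT}) g, H \in X -> g \in G -> (H :^ g)%G \in X.

Lemma chains_conj X c g : Ginv X -> g \in G -> c \in chains X ->
  conj_chain c g \in chains X.
Proof.
move=> XJ Gg; rewrite inE => /and3P[c0 cX /forall_inP cc].
rewrite inE; apply/and3P; split.
- apply: contra c0 => /eqP e; apply/eqP/setP => H; rewrite inE.
  apply/negbTE/negP => Hc.
  by have := mem_conj_chain g Hc; rewrite e inE.
- by apply/subsetP => K /conj_chainP[H Hc ->]; apply: XJ => //; exact: (subsetP cX).
- apply/forall_inP => K /conj_chainP[H Hc ->]; apply/forall_inP => L /conj_chainP[H' H'c ->].
  by rewrite /= !conjSg; have /forall_inP := cc _ Hc; apply.
Qed.

Lemma chain_orbit_refl c : c \in chain_orbit G c.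
Proof. by apply/imsetP; exists 1; rewrite ?group1 ?conj_chain1. Qed.

Lemma chain_orbitP c d :
  reflect (exists2 g, g \in G & d = conj_chain c g) (d \in chain_orbit G c).
Proof. exact: imsetP. Qed.

Lemma chain_orbit_conj c g : g \in G -> chain_orbit G (conj_chain c g) = chain_orbit G c.
Proof.
move=> Gg; apply/setP => d; apply/chain_orbitP/chain_orbitP => -[h Gh ->].
  by exists (g * h); rewrite ?groupM // conj_chainM.
exists (g^-1 * h); rewrite ?groupM ?groupV // conj_chainM mulgA mulgV mul1g //.
Qed.

Lemma chain_orbit_eq c d : d \in chain_orbit G c -> chain_orbit G d = chain_orbit G c.
Proof. by case/chain_orbitP => g Gg ->; exact: chain_orbit_conj. Qed.

Lemma orbit_leP c d :
  reflect (exists2 g, g \in G & conj_chain c g \subset d)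
          (orbit_le (chain_orbit G c) (chain_orbit G d)).
Proof.
apply: (iffP idP).
  case/exists_inP => c' /chain_orbitP[g1 Gg1 ->] /exists_inP[d' /chain_orbitP[g2 Gg2 ->] sub].
  exists (g1 * g2^-1); first by rewrite groupM ?groupV.
  rewrite -conj_chainM -(conj_chainK d g2).
  exact: conj_chainS.
case=> g Gg sub; apply/exists_inP; exists (conj_chain c g).
  by apply/chain_orbitP; exists g.
by apply/exists_inP; exists d => //; exact: chain_orbit_refl.
Qed.

Lemma orbit_le_sub c d : c \subset d -> orbit_le (chain_orbit G c) (chain_orbit G d).
Proof. by move=> cd; apply/orbit_leP; exists 1; rewrite ?conj_chain1. Qed.

Lemma orbit_le_refl c : orbit_le (chain_orbit G c) (chain_orbit G c).
Proof. exact: orbit_le_sub. Qed.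

Lemma orbit_le_trans c d e :
  orbit_le (chain_orbit G c) (chain_orbit G d) ->
  orbit_le (chain_orbit G d) (chain_orbit G e) ->
  orbit_le (chain_orbit G c) (chain_orbit G e).
Proof.
case/orbit_leP => g Gg s1 /orbit_leP[h Gh s2]; apply/orbit_leP.
exists (g * h); first exact: groupM.
by rewrite -conj_chainM (subset_trans (conj_chainS h s1)).
Qed.

Definition rep X (O : {set {set {group gT}}}) : {set {group gT}} :=
  odflt set0 [pick c in chains X | chain_orbit G c == O].

Lemma repP X O : O \in orbit_chains G X ->
  rep X O \in chains X /\ chain_orbit G (rep X O) = O.
Proof.
case/imsetP => c cX ->; rewrite /rep.
case: pickP => [d /andP[dX /eqP e] | /(_ c)]; first by [].
by rewrite cX eqxx.
Qed.

Lemma orbit_chains_le_refl X : forall O, O \in orbit_chains G X -> orbit_le O O.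
Proof. by move=> O /imsetP[c _ ->]; exact: orbit_le_refl. Qed.

Lemma orbit_chains_le_trans X : forall O1 O2 O3, O1 \in orbit_chains G X ->
  O2 \in orbit_chains G X -> O3 \in orbit_chains G X ->
  orbit_le O1 O2 -> orbit_le O2 O3 -> orbit_le O1 O3.
Proof.
move=> O1 O2 O3 /imsetP[c _ ->] /imsetP[d _ ->] /imsetP[e _ ->].
exact: orbit_le_trans.
Qed.

End OrbitBasics.
Section OrbitFence.
Local Open Scope group_scope.
Variables (gT : finGroupType) (G : {group gT}) (X : {set {group gT}}).
Hypothesis XJ : Ginv G X.
Variables (m : nat) (Phi : nat -> {set {group gT}} -> {set {group gT}})
  (c0 : {set {group gT}}).
Hypothesis c0X : c0 \in chains X.
Hypothesis PhiX : forall i c, c \in chains X -> Phi i c \in chains X.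
Hypothesis PhiJ : forall i c g, c \in chains X -> g \in G ->
  chain_orbit G (Phi i (conj_chain c g)) = chain_orbit G (Phi i c).
Hypothesis PhiS : forall i c d, c \in chains X -> d \in chains X -> c \subset d ->
  orbit_le (chain_orbit G (Phi i c)) (chain_orbit G (Phi i d)).
Hypothesis Phi0 : forall c, c \in chains X -> Phi 0 c = c.
Hypothesis Phim : forall c, c \in chains X -> chain_orbit G (Phi m.*2 c) = chain_orbit G c0.
Hypothesis Phicmp : forall (j : nat) c, (j < m)%nat -> c \in chains X ->
  orbit_le (chain_orbit G (Phi j.*2 c)) (chain_orbit G (Phi j.*2.+1 c)) /\
  orbit_le (chain_orbit G (Phi j.+1.*2 c)) (chain_orbit G (Phi j.*2.+1 c)).

Local Notation Y := (finspace (@orbit_le gT) (orbit_chains G X)).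

Lemma lift_mem i (x : Y) : chain_orbit G (Phi i (rep G X (val x))) \in orbit_chains G X.
Proof.
have [rX _] := repP (valP x).
by apply/imsetP; exists (Phi i (rep G X (val x))) => //; exact: PhiX.
Qed.

Definition Ymk (O : {set {set {group gT}}}) (h : O \in orbit_chains G X) : Y :=
  exist (fun O => O \in orbit_chains G X) O h.
Definition liftO i (x : Y) : Y := Ymk (lift_mem i x).

Lemma c0_mem : chain_orbit G c0 \in orbit_chains G X.
Proof. by apply/imsetP; exists c0. Qed.

Lemma orbit_fence_contractible : contractible Y.
Proof.
apply: (@fence_contractible _ _ _ (@orbit_chains_le_refl _ G X)
   (@orbit_chains_le_trans _ G X) m liftO _ _ _ (Ymk c0_mem)).
- move=> i x y; have [rx ex] := repP (valP x); have [ry ey] := repP (valP y).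
  rewrite /= -{1}ex -{1}ey => /orbit_leP[g Gg sub].
  rewrite -(PhiJ i rx Gg); apply: PhiS => //; exact: (chains_conj XJ Gg rx).
- move=> j x jm; have [rx ex] := repP (valP x); exact: Phicmp.
- move=> x; apply: val_inj => /=; have [rx ex] := repP (valP x).
  by rewrite Phi0.
- move=> x; apply: val_inj => /=; have [rx ex] := repP (valP x).
  by rewrite Phim.
Qed.
End OrbitFence.
Section AddM.
Local Open Scope group_scope.
Variables (gT : finGroupType) (G : {group gT}) (X : {set {group gT}}) (M0 : {group gT}).
Hypothesis XJ : Ginv G X.
Implicit Types (c d : {set {group gT}}) (g : gT).
Hypothesis M0X : M0 \in X.
Variable Yc : pred {set {group gT}}.
Hypothesis YcX : forall c, Yc c -> c \in chains X.
Hypothesis YcJ : forall c g, Yc c -> g \in G -> Yc (conj_chain c g).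

Definition Mset := [set (M0 :^ g)%G | g in G].
Definition below (c : {set {group gT}}) (M : {group gT}) := [forall H in c, H \subset M].

Hypothesis Yex : forall c, Yc c -> exists2 M, M \in Mset & below c M.
Hypothesis Yfus : forall c M1 M2, Yc c -> M1 \in Mset -> M2 \in Mset ->
  below c M1 -> below c M2 ->
  exists2 y, y \in G & conj_chain c y = c /\ (M1 :^ y)%G = M2.

Definition addM c := c :|: [set odflt M0 [pick M in Mset | below c M]].

Lemma MsetX M : M \in Mset -> M \in X.
Proof. by case/imsetP => g Gg ->; exact: XJ. Qed.

Lemma addM_pick c : Yc c ->
  exists M, [/\ M \in Mset, below c M & addM c = c :|: [set M]].
Proof.
move=> Yc_c; rewrite /addM; case: pickP => [M /andP[MM bM] | none].
  by exists M.
have [M MM bM] := Yex Yc_c; by have := none M; rewrite MM bM.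
Qed.

Lemma addM_chain c : Yc c -> addM c \in chains X.
Proof.
move=> Yc_c; have [M [MM bM ->]] := addM_pick Yc_c.
have := YcX Yc_c; rewrite !inE => /and3P[c0 cX /forall_inP cc].
apply/and3P; split.
- by apply: contra c0; rewrite setU_eq0 => /andP[].
- by rewrite subUset cX sub1set MsetX.
- move/forall_inP: bM => bM.
  apply/forall_inP => H; rewrite inE => /orP[Hc|/set1P->];
    apply/forall_inP => K; rewrite inE => /orP[Kc|/set1P->].
  + by have /forall_inP := cc _ Hc; apply.
  + by rewrite bM.
  + by rewrite bM ?orbT.
  + by rewrite subxx.
Qed.

Lemma conj_chainU c d g : conj_chain (c :|: d) g = conj_chain c g :|: conj_chain d g.
Proof. exact: imsetU. Qed.

Lemma conj_chain_set1 (M : {group gT}) g : conj_chain [set M] g = [set (M :^ g)%G].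
Proof. exact: imset_set1. Qed.

Lemma addM_spec c M : Yc c -> M \in Mset -> below c M ->
  chain_orbit G (addM c) = chain_orbit G (c :|: [set M]).
Proof.
move=> Yc_c MM bM; have [M' [MM' bM' ->]] := addM_pick Yc_c.
have [y Gy [ey eM]] := Yfus Yc_c MM' MM bM' bM.
by rewrite -(chain_orbit_conj _ Gy) conj_chainU conj_chain_set1 ey eM.
Qed.

Lemma MsetJ M g : M \in Mset -> g \in G -> (M :^ g)%G \in Mset.
Proof.
case/imsetP => h Gh -> Gg; apply/imsetP; exists (h * g); first exact: groupM.
exact: conjG_groupM.
Qed.

Lemma belowJ c M g : below c M -> below (conj_chain c g) (M :^ g)%G.
Proof.
move/forall_inP => bM; apply/forall_inP => K /conj_chainP[H Hc ->].
by rewrite /= conjSg bM.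
Qed.

Lemma belowS c d M : c \subset d -> below d M -> below c M.
Proof.
move=> cd /forall_inP bM; apply/forall_inP => H Hc; apply: bM; exact: (subsetP cd).
Qed.

Lemma addM_J c g : Yc c -> g \in G ->
  chain_orbit G (addM (conj_chain c g)) = chain_orbit G (addM c).
Proof.
move=> Yc_c Gg; have [M [MM bM ->]] := addM_pick Yc_c.
rewrite (addM_spec (YcJ Yc_c Gg) (MsetJ MM Gg) (belowJ g bM)).
by rewrite -conj_chain_set1 -conj_chainU chain_orbit_conj.
Qed.

Lemma addM_S c d : Yc c -> Yc d -> c \subset d ->
  orbit_le (chain_orbit G (addM c)) (chain_orbit G (addM d)).
Proof.
move=> Yc_c Yd cd; have [M [MM bM ->]] := addM_pick Yd.
rewrite (addM_spec Yc_c MM (belowS cd bM)); apply: orbit_le_sub.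
exact: setSU.
Qed.

Lemma addM_ge c : orbit_le (chain_orbit G c) (chain_orbit G (addM c)).
Proof. apply: orbit_le_sub; exact: subsetUl. Qed.

Lemma addM_const c : Yc c ->
  orbit_le (chain_orbit G [set M0]) (chain_orbit G (addM c)).
Proof.
move=> Yc_c; have [M [MM bM ->]] := addM_pick Yc_c.
case/imsetP: MM => g Gg ->; apply/orbit_leP; exists g => //.
by rewrite conj_chain_set1 subsetUr.
Qed.

End AddM.
Section Groups1.
Local Open Scope group_scope.
Variables (gT : finGroupType) (G : {group gT}) (p : nat).
Implicit Types (H K P M : {group gT}) (c d : {set {group gT}}).

Lemma SpP H : reflect [/\ H \subset G, p.-group H & H :!=: 1] (H \in Sp p G).
Proof. by rewrite inE; apply: and3P. Qed.

Lemma ApP H : reflect [/\ H \subset G, p.-abelem H & H :!=: 1] (H \in Ap p G).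
Proof. by rewrite inE; apply: and3P. Qed.

Lemma BpE H : (H \in Bp p G) = (H \in Sp p G) && (H :==: 'O_p('N_G(H))).
Proof. by rewrite inE. Qed.

Lemma ApSp H : H \in Ap p G -> H \in Sp p G.
Proof. by case/ApP => sHG /abelem_pgroup pH ntH; apply/SpP. Qed.

Lemma BpSp H : H \in Bp p G -> H \in Sp p G.
Proof. by rewrite BpE => /andP[]. Qed.

Lemma conj_subG H g : g \in G -> H \subset G -> H :^ g \subset G.
Proof. by move=> Gg sHG; rewrite -(conjGid Gg) conjSg. Qed.

Lemma ntJ H g : (H :^ g :!=: 1) = (H :!=: 1).
Proof. by rewrite conjsg_eq1. Qed.

Lemma Sp_J : Ginv G (Sp p G).
Proof.
move=> H g /SpP[sHG pH ntH] Gg; apply/SpP; split.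
- exact: conj_subG.
- by rewrite /= pgroupJ.
- by rewrite /= ntJ.
Qed.

Lemma Ap_J : Ginv G (Ap p G).
Proof.
move=> H g /ApP[sHG pH ntH] Gg; apply/ApP; split.
- exact: conj_subG.
- by rewrite /= abelemJ.
- by rewrite /= ntJ.
Qed.

Lemma normGJ H g : g \in G -> 'N_G(H :^ g) = 'N_G(H) :^ g.
Proof. by move=> Gg; rewrite conjIg normJ conjGid. Qed.

Lemma Bp_J : Ginv G (Bp p G).
Proof.
move=> H g; rewrite !BpE => /andP[SpH /eqP eH] Gg; rewrite Sp_J //=.
by rewrite normGJ // pcoreJ -eH.
Qed.

Lemma chain_max X c : c \in chains X -> exists2 K, K \in c & below c K.
Proof.
rewrite inE => /and3P[/set0Pn[H0 H0c] _ /forall_inP cc].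
pose K := [arg max_(H > H0 in c) #|H|].
have Kc : K \in c by rewrite /K; case: arg_maxnP.
exists K => //; apply/forall_inP => H Hc.
have := cc _ Hc => /forall_inP /(_ _ Kc) /orP[//|sKH].
have le : #|H| <= #|K| by rewrite /K; case: arg_maxnP => // L _; apply.
have /eqP e : (K :==: H) by rewrite eqEcard sKH le.
by rewrite e.
Qed.

Lemma chain_centralized c y :
  y \in 'C(\bigcup_(H in c) H) -> conj_chain c y = c.
Proof.
move=> Cy; rewrite /conj_chain (eq_in_imset (g := id)) ?imset_id // => H Hc.
apply: val_inj => /=; apply/normP; apply: (subsetP (cent_sub H)).
by apply: (subsetP (centS _)) Cy; exact: (bigcup_max H).
Qed.

Lemma below_bigcup c M : below c M -> \bigcup_(H in c) H \subset M.
Proof. by move/forall_inP => bM; apply/bigcupsP. Qed.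

End Groups1.
Section AddMContract.
Local Open Scope group_scope.
Variables (gT : finGroupType) (G : {group gT}) (X : {set {group gT}}) (M0 : {group gT}).
Hypothesis XJ : Ginv G X.
Hypothesis M0X : M0 \in X.
Hypothesis Yex : forall c, c \in chains X -> exists2 M, M \in Mset G M0 & below c M.
Hypothesis Yfus : forall c M1 M2, c \in chains X -> M1 \in Mset G M0 -> M2 \in Mset G M0 ->
  below c M1 -> below c M2 ->
  exists2 y, y \in G & conj_chain c y = c /\ (M1 :^ y)%G = M2.

Lemma set1_chain : [set M0] \in chains X.
Proof.
rewrite inE; apply/and3P; split.
- by apply/set0Pn; exists M0; rewrite inE.
- by rewrite sub1set.
- by apply/forall_inP => H /set1P->; apply/forall_inP => K /set1P->; rewrite subxx.
Qed.

Definition PhiA (i : nat) (c : {set {group gT}}) :=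
  if i == 0%nat then c else if i == 1%nat then addM G M0 c else [set M0].

Lemma addM_contractible : contractible (orbit_space G X).
Proof.
have YcX : forall c, c \in chains X -> c \in chains X by [].
have YcJ : forall c g, c \in chains X -> g \in G -> conj_chain c g \in chains X.
  by move=> c g cX Gg; exact: (chains_conj XJ Gg cX).
apply: (@orbit_fence_contractible _ G X XJ 1 PhiA [set M0] set1_chain).
- move=> [|[|i]] c cX //=; first exact: (addM_chain (Yc := fun c => c \in chains X) XJ M0X YcX Yex cX).
  exact: set1_chain.
- move=> [|[|i]] c g cX Gg //=; first exact: chain_orbit_conj.
  exact: (addM_J (Yc := fun c => c \in chains X) YcJ Yex Yfus cX Gg).
- move=> [|[|i]] c d cX dX cd //=; first exact: orbit_le_sub.
    exact: (addM_S (Yc := fun c => c \in chains X) Yex Yfus cX dX cd).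
  exact: orbit_le_refl.
- by [].
- by [].
- move=> [|j] c // _ cX /=; split.
    exact: addM_ge.
  exact: (addM_const (Yc := fun c => c \in chains X) Yex cX).
Qed.
End AddMContract.
Section KGroups.
Local Open Scope group_scope.
Variables (gT : finGroupType) (G : {group gT}) (p : nat).
Implicit Types (H K P M : {group gT}) (c d : {set {group gT}}).
Hypothesis Kp : forall P, P \in 'Syl_p(G) -> p.-abelem 'Ohm_1(P).
Variable P0 : {group gT}.
Hypothesis sylP0 : p.-Sylow(G) P0.
Hypothesis ntP0 : P0 :!=: 1.

Lemma K_Ohm H : H \subset G -> p.-group H -> p.-abelem 'Ohm_1(H).
Proof.
move=> sHG pH; have [P sylP sHP] := Sylow_superset sHG pH.
by apply: abelemS (OhmS 1 sHP) (Kp _); rewrite inE.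
Qed.

Lemma abelem_sub_Ohm (E : {group gT}) H : p.-abelem E -> E \subset H -> E \subset 'Ohm_1(H).
Proof. by move=> aE sEH; rewrite -(Ohm1_id aE) OhmS. Qed.

Lemma Ohm_Ap H : H \in Sp p G -> ('Ohm_1(H))%G \in Ap p G.
Proof.
case/SpP => sHG pH ntH; apply/ApP; split => /=.
- exact: subset_trans (Ohm_sub 1 H) sHG.
- exact: K_Ohm.
- by rewrite Ohm1_eq1.
Qed.

Definition M0 := ('Ohm_1(P0))%G.

Lemma P0Sp : P0 \in Sp p G.
Proof. by apply/SpP; split => //; [exact: pHall_sub sylP0 | exact: pHall_pgroup sylP0]. Qed.

Lemma M0Ap : M0 \in Ap p G.
Proof. exact: Ohm_Ap P0Sp. Qed.

Lemma MsetE M : M \in Mset G M0 ->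
  exists2 g, g \in G & M = ('Ohm_1(P0 :^ g))%G /\ p.-Sylow(G) (P0 :^ g).
Proof.
case/imsetP => g Gg ->; exists g => //; split; last by rewrite pHallJ.
by apply: val_inj; rewrite /= OhmJ.
Qed.

Lemma Mset_props M : M \in Mset G M0 ->
  [/\ M \subset G, p.-abelem M & #|M| = #|M0|].
Proof.
move=> MM; have [g Gg [-> sylg]] := MsetE MM; split.
- exact: subset_trans (Ohm_sub 1 _) (pHall_sub sylg).
- by apply: Kp; rewrite inE.
- by rewrite /= OhmJ cardJg.
Qed.

Lemma Yex_A c : c \in chains (Ap p G) -> exists2 M, M \in Mset G M0 & below c M.
Proof.
move=> cA; have [K Kc bK] := chain_max cA.
have := cA; rewrite inE => /and3P[_ /subsetP cAp _].
have /ApP[sKG aK _] := cAp _ Kc.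
have [g Gg sKP] := Sylow_subJ sylP0 sKG (abelem_pgroup aK).
exists (M0 :^ g)%G; first by apply/imsetP; exists g.
apply/forall_inP => H Hc; have /forall_inP := bK; move/(_ _ Hc) => sHK.
by rewrite /= -OhmJ (subset_trans sHK) // abelem_sub_Ohm.
Qed.

Lemma Ohm_Sylow_eq M (S : {group gT}) : M \in Mset G M0 -> S \subset G -> p.-group S ->
  M \subset S -> 'Ohm_1(S) = M.
Proof.
move=> MM sSG pS sMS; have [sMG aM cM] := Mset_props MM.
have [h Gh sSP] := Sylow_subJ sylP0 sSG pS.
apply/eqP; rewrite eq_sym eqEcard abelem_sub_Ohm //=.
apply: leq_trans (subset_leq_card (OhmS 1 sSP)) _.
by rewrite OhmJ cardJg cM.
Qed.

Lemma Yfus_A c M1 M2 : c \in chains (Ap p G) -> M1 \in Mset G M0 -> M2 \in Mset G M0 ->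
  below c M1 -> below c M2 ->
  exists2 y, y \in G & conj_chain c y = c /\ (M1 :^ y)%G = M2.
Proof.
move=> cA M1M M2M b1 b2.
pose A := \bigcup_(H in c) H.
pose C := 'C_G(A).
have sMC M : M \in Mset G M0 -> below c M -> M \subset C.
  move=> MM bM; have [sMG aM _] := Mset_props MM.
  rewrite subsetI sMG sub_abelian_cent ?(abelem_abelian aM) //.
  exact: below_bigcup.
have [sM1G aM1 _] := Mset_props M1M; have [sM2G aM2 _] := Mset_props M2M.
have [S1 sylS1 sMS1] := Sylow_superset (sMC _ M1M b1) (abelem_pgroup aM1).
have [S2 sylS2 sMS2] := Sylow_superset (sMC _ M2M b2) (abelem_pgroup aM2).
have [y Cy eS] := Sylow_trans sylS1 sylS2.
have sCG : C \subset G by exact: subsetIl.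
have sSG (S : {group gT}) : p.-Sylow(C) S -> S \subset G.
  by move=> sylS; exact: subset_trans (pHall_sub sylS) sCG.
have e1 := Ohm_Sylow_eq M1M (sSG _ sylS1) (pHall_pgroup sylS1) sMS1.
have e2 := Ohm_Sylow_eq M2M (sSG _ sylS2) (pHall_pgroup sylS2) sMS2.
exists y; first exact: (subsetP sCG).
split.
  apply: chain_centralized; by case/setIP: Cy.
by apply: val_inj; rewrite /= -e1 -e2 eS OhmJ.
Qed.

Lemma Ap_contractible : contractible (orbit_space G (Ap p G)).
Proof.
exact: (addM_contractible (@Ap_J _ G p) M0Ap Yex_A Yfus_A).
Qed.

End KGroups.
Section SpFence.
Local Open Scope group_scope.
Variables (gT : finGroupType) (G : {group gT}) (p : nat).
Implicit Types (H K P M : {group gT}) (c d : {set {group gT}}).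
Hypothesis Kp : forall P, P \in 'Syl_p(G) -> p.-abelem 'Ohm_1(P).
Variable P0 : {group gT}.
Hypothesis sylP0 : p.-Sylow(G) P0.
Hypothesis ntP0 : P0 :!=: 1.

Local Notation Sp := (Sp p G).
Local Notation Ap := (Ap p G).

Definition lg H := logn p #|H|.
Definition phi (j : nat) H : {group gT} := if (lg H < j)%nat then ('Ohm_1(H))%G else H.
Definition hth j c := [set phi j H | H in c].
Definition kth j c := hth j.+1 c :|: hth j c.

Lemma phi_sub j H : phi j H \subset H.
Proof. by rewrite /phi; case: ifP => _ //=; exact: Ohm_sub. Qed.

Lemma phi_Sp j H : H \in Sp -> phi j H \in Sp.
Proof. by move=> SH; rewrite /phi; case: ifP => _ //; exact/ApSp/(Ohm_Ap Kp). Qed.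

Lemma phiJ j H g : phi j (H :^ g)%G = (phi j H :^ g)%G.
Proof.
rewrite /phi /lg /= cardJg; case: ifP => _ //; apply: val_inj; exact: OhmJ.
Qed.

Lemma hthJ j c g : hth j (conj_chain c g) = conj_chain (hth j c) g.
Proof.
rewrite /hth /conj_chain -!imset_comp; apply: eq_imset => H /=; exact: phiJ.
Qed.

Lemma kthJ j c g : kth j (conj_chain c g) = conj_chain (kth j c) g.
Proof. by rewrite /kth !hthJ conj_chainU. Qed.

Lemma hthS j c d : c \subset d -> hth j c \subset hth j d.
Proof. exact: imsetS. Qed.

Lemma kthS j c d : c \subset d -> kth j c \subset kth j d.
Proof. by move=> cd; rewrite /kth setUSS // hthS. Qed.

Lemma lg_mono H K : H \subset K -> (lg H <= lg K)%nat.
Proof. by move=> sHK; apply: dvdn_leq_log (cardG_gt0 K) (cardSg sHK). Qed.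

Lemma phi_cmp a b H K : H \in Sp -> K \in Sp -> H \subset K ->
  (a <= b.+1)%nat -> (b <= a.+1)%nat ->
  (phi a H \subset phi b K) || (phi b K \subset phi a H).
Proof.
move=> SH SK sHK ab ba.
case hK: (lg K < b)%nat; last first.
  have -> : phi b K = K by rewrite /phi hK.
  by rewrite (subset_trans (phi_sub a H) sHK).
have -> : phi b K = ('Ohm_1(K))%G by rewrite /phi hK.
case hH: (lg H < a)%nat.
  by rewrite /phi hH /= OhmS.
have -> : phi a H = H by rewrite /phi hH.
have lHK := lg_mono sHK.
have eHK : lg H = lg K by move: hH hK ab lHK; rewrite /lg; lia.
have /eqP e : H :==: K.
  have pH : p.-group H by case/SpP: SH.
  have pK : p.-group K by case/SpP: SK.
  rewrite eqEcard sHK /= (card_pgroup pH) (card_pgroup pK).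
  by move: eHK; rewrite /lg => ->.
by rewrite e /= Ohm_sub orbT.
Qed.

Lemma chains_sub (X : {set {group gT}}) c d : c \in chains X -> d \subset c -> d != set0 -> d \in chains X.
Proof.
rewrite !inE => /and3P[_ cX /forall_inP cc] dc d0; apply/and3P; split => //.
  exact: subset_trans dc cX.
apply/forall_inP => H Hd; apply/forall_inP => K Kd.
by have /forall_inP := cc _ (subsetP dc _ Hd); apply; exact: (subsetP dc).
Qed.

Lemma chains_Y (X Y : {set {group gT}}) c : c \in chains X -> c \subset Y -> c \in chains Y.
Proof. by rewrite !inE => /and3P[c0 _ cc] cY; rewrite c0 cY. Qed.

Lemma hth_nonempty j c : c != set0 -> hth j c != set0.
Proof.
case/set0Pn => H Hc; apply/set0Pn; exists (phi j H); exact: imset_f.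
Qed.

Lemma ab_close (j a b : nat) : (a == j) || (a == j.+1) -> (b == j) || (b == j.+1) ->
  (a <= b.+1)%nat.
Proof. move=> /orP[]/eqP-> /orP[]/eqP->; lia. Qed.

Lemma kth_chain j c : c \in chains Sp -> kth j c \in chains Sp.
Proof.
move=> cS; have := cS; rewrite !inE => /and3P[c0 cSp /forall_inP cc].
have memk K : K \in kth j c ->
    exists a, exists2 H, H \in c & [/\ (a == j) || (a == j.+1) & K = phi a H].
  rewrite inE => /orP[] /imsetP[H Hc ->].
    by exists j.+1, H; rewrite ?eqxx ?orbT.
  by exists j, H; rewrite ?eqxx.
apply/and3P; split.
- by rewrite setU_eq0 negb_and hth_nonempty.
- apply/subsetP => K /memk[a [H Hc [_ ->]]]; apply: phi_Sp.
  exact: (subsetP cSp).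
- apply/forall_inP => K1 /memk[a1 [H1 H1c [ha1 ->]]].
  apply/forall_inP => K2 /memk[a2 [H2 H2c [ha2 ->]]].
  have S1 := subsetP cSp _ H1c; have S2 := subsetP cSp _ H2c.
  have /forall_inP := cc _ H1c => /(_ _ H2c) /orP[s12|s21].
    by apply: phi_cmp => //; first [exact: (ab_close ha1 ha2) | exact: (ab_close ha2 ha1)].
  by rewrite orbC; apply: phi_cmp => //; first [exact: (ab_close ha1 ha2) | exact: (ab_close ha2 ha1)].
Qed.

Lemma hth_chain j c : c \in chains Sp -> hth j c \in chains Sp.
Proof.
move=> cS; apply: chains_sub (kth_chain j cS) (subsetUr _ _) _.
apply: hth_nonempty; move: cS; rewrite inE => /and3P[].
by [].
Qed.

Lemma hth0 c : hth 0 c = c.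
Proof.
rewrite /hth (eq_imset (g := id)) ?imset_id // => H; by rewrite /phi ltn0.
Qed.

Definition N := (lg G).+1.

Lemma hth_Ap c : c \in chains Sp -> hth N c \in chains Ap.
Proof.
move=> cS; apply: chains_Y (hth_chain N cS) _.
apply/subsetP => K /imsetP[H Hc ->].
have SH : H \in Sp by move: cS; rewrite inE => /and3P[_ /subsetP sc _]; exact: sc.
have -> : phi N H = ('Ohm_1(H))%G.
  rewrite /phi /N ltnS lg_mono //; by case/SpP: SH.
exact: Ohm_Ap.
Qed.

Local Notation M0 := (M0 P0).

Definition PhiS (i : nat) c :=
  if (i <= N.*2)%nat then (if odd i then kth i./2 c else hth i./2 c)
  else if i == N.*2.+1 then addM G M0 (hth N c) else [set M0].

Lemma PhiS_even j c : (j <= N)%nat -> PhiS j.*2 c = hth j c.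
Proof. by move=> jN; rewrite /PhiS leq_double jN odd_double doubleK. Qed.

Lemma PhiS_odd j c : (j < N)%nat -> PhiS j.*2.+1 c = kth j c.
Proof.
move=> jN; rewrite /PhiS ltn_double jN /= odd_double /= uphalf_double //.
Qed.

Lemma PhiS_top c : PhiS N.*2.+1 c = addM G M0 (hth N c).
Proof. by rewrite /PhiS ltnn eqxx. Qed.

Lemma PhiS_last c : PhiS N.+1.*2 c = [set M0].
Proof.
rewrite /PhiS doubleS ltnNge leqnSn /=.
by rewrite eqSS (gtn_eqF (ltnSn _)).
Qed.

Lemma PhiS_shape i :
  [\/ exists j, forall c, PhiS i c = hth j c,
      exists j, forall c, PhiS i c = kth j c,
      (forall c, PhiS i c = addM G M0 (hth N c)) |
      (forall c, PhiS i c = [set M0])].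
Proof.
case hle: (i <= N.*2)%nat.
  case ho: (odd i).
    by constructor 2; exists i./2 => c; rewrite /PhiS hle ho.
  by constructor 1; exists i./2 => c; rewrite /PhiS hle ho.
case he: (i == N.*2.+1).
  by constructor 3 => c; rewrite /PhiS hle he.
by constructor 4 => c; rewrite /PhiS hle he.
Qed.

Lemma Ap_chains_Sp c : c \in chains Ap -> c \in chains Sp.
Proof.
move=> cA; have := cA; rewrite inE => /and3P[_ sA _].
apply: (chains_Y cA); apply/subsetP => H /(subsetP sA); exact: ApSp.
Qed.

Lemma M0Sp : M0 \in Sp.
Proof. exact/ApSp/(M0Ap Kp sylP0 ntP0). Qed.

Lemma Sp_contractible : contractible (orbit_space G Sp).
Proof.
have YcJ : forall c g, c \in chains Ap -> g \in G -> conj_chain c g \in chains Ap.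
  by move=> c g cA Gg; exact: (chains_conj (@Ap_J _ G p) Gg cA).
have Yex := Yex_A sylP0.
have Yfus := Yfus_A Kp sylP0.
apply: (@orbit_fence_contractible _ G Sp (@Sp_J _ G p) N.+1 PhiS [set M0]
          (set1_chain M0Sp)).
- move=> i c cS; case: (PhiS_shape i) => [[j e]|[j e]|e|e]; rewrite !e.
  + exact: hth_chain.
  + exact: kth_chain.
  + exact: (addM_chain (Yc := fun c => c \in chains Ap) (@Sp_J _ G p) M0Sp
              Ap_chains_Sp Yex (hth_Ap cS)).
  + exact: set1_chain M0Sp.
- move=> i c g cS Gg; case: (PhiS_shape i) => [[j e]|[j e]|e|e]; rewrite !e //.
  + by rewrite !hthJ chain_orbit_conj.
  + by rewrite !kthJ chain_orbit_conj.
  + by rewrite hthJ (addM_J (Yc := fun c => c \in chains Ap) YcJ Yex Yfus (hth_Ap cS) Gg).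
- move=> i c d cS dS cd; case: (PhiS_shape i) => [[j e]|[j e]|e|e]; rewrite !e.
  + by apply: orbit_le_sub; exact: hthS.
  + by apply: orbit_le_sub; exact: kthS.
  + exact: (addM_S (Yc := fun c => c \in chains Ap) Yex Yfus (hth_Ap cS) (hth_Ap dS) (hthS N cd)).
  + exact: orbit_le_refl.
- by move=> c cS; rewrite -(double0) PhiS_even // hth0.
- by move=> c cS; rewrite PhiS_last.
- move=> j c jN cS; rewrite ltnS leq_eqVlt in jN; case/orP: jN => [/eqP ->|jN].
    rewrite PhiS_even // PhiS_top PhiS_last; split.
      exact: addM_ge.
    exact: (addM_const (Yc := fun c => c \in chains Ap) Yex (hth_Ap cS)).
  rewrite PhiS_even ?(ltnW jN) // PhiS_odd // PhiS_even //.
  by split; apply: orbit_le_sub; rewrite /kth ?subsetUl ?subsetUr.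
Qed.

End SpFence.
Section AbelianSyl.
Local Open Scope group_scope.
Variables (gT : finGroupType) (G : {group gT}) (p : nat).
Implicit Types (H K P M : {group gT}) (c d : {set {group gT}}).
Hypothesis abS : forall P, P \in 'Syl_p(G) -> abelian P.

Lemma Kp_ab P : P \in 'Syl_p(G) -> p.-abelem 'Ohm_1(P).
Proof.
move=> sylP; apply: Ohm1_abelem; last exact: abS.
by move: sylP; rewrite inE => /pHall_pgroup.
Qed.

Definition TT H : {set gT} := \bigcap_(P in 'Syl_p(G) | H \subset P) gval P.

Lemma sylP_N H P : p.-Sylow(G) P -> H \subset P -> P \subset 'N_G(H).
Proof.
move=> sylP sHP; rewrite subsetI (pHall_sub sylP).
apply: subset_trans (cent_sub H); apply: sub_abelian_cent sHP.
by apply: abS; rewrite inE.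
Qed.

Lemma TT_sub H P : p.-Sylow(G) P -> H \subset P -> TT H \subset P.
Proof. by move=> sylP sHP; apply: (bigcap_inf P); rewrite inE sylP. Qed.

Lemma TT_group H : group_set (TT H).
Proof.
apply/group_setP; split.
  by apply/bigcapP => P _; exact: group1.
move=> x y /bigcapP hx /bigcapP hy; apply/bigcapP => P hP.
by apply: groupM; [exact: hx | exact: hy].
Qed.

Canonical TT_grp H := Group (TT_group H).

Lemma TT_exists H : H \subset G -> p.-group H ->
  exists2 P : {group gT}, p.-Sylow(G) P & H \subset P.
Proof. by move=> sHG pH; have [P sylP sHP] := Sylow_superset sHG pH; exists P. Qed.

Lemma TT_pgroup H : H \subset G -> p.-group H -> p.-group (TT H).
Proof.
move=> sHG pH; have [P sylP sHP] := TT_exists sHG pH.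
exact: pgroupS (TT_sub sylP sHP) (pHall_pgroup sylP).
Qed.

Lemma TT_norm H g : g \in 'N_G(H) -> TT H :^ g \subset TT H.
Proof.
case/setIP => Gg Ng; apply/bigcapsP => P /andP[sylP sHP].
rewrite inE in sylP.
rewrite sub_conjg; apply: (TT_sub (P := (P :^ g^-1)%G)).
  by rewrite /= pHallJ ?groupV.
by rewrite /= -sub_conjg (normP Ng).
Qed.

Lemma TT_normal H : H \subset G -> p.-group H -> TT H <| 'N_G(H).
Proof.
move=> sHG pH; have [P sylP sHP] := TT_exists sHG pH.
apply/andP; split.
  exact: subset_trans (TT_sub sylP sHP) (sylP_N sylP sHP).
apply/subsetP => g Ng; apply/normP; apply/eqP.
by rewrite eqEcard TT_norm // cardJg leqnn.
Qed.

Lemma rT H : H \subset G -> p.-group H -> 'O_p('N_G(H)) = TT H.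
Proof.
move=> sHG pH; apply/eqP; rewrite eqEsubset; apply/andP; split.
  apply/bigcapsP => P /andP[sylP sHP]; rewrite inE in sylP.
  apply: pcore_sub_Hall; apply: pHall_subl (sylP_N sylP sHP) (subsetIl _ _) sylP.
exact: (pcore_max (TT_pgroup sHG pH) (TT_normal sHG pH)).
Qed.

Definition rB H : {group gT} := ('O_p('N_G(H)))%G.

Lemma rB_ge H : H \subset G -> p.-group H -> H \subset rB H.
Proof. by move=> sHG pH; exact: pcore_max pH (normalSG sHG). Qed.

Lemma rB_Sp H : H \in Sp p G -> rB H \in Sp p G.
Proof.
case/SpP => sHG pH ntH; apply/SpP; split => /=.
- exact: subset_trans (pcore_sub _ _) (subsetIl _ _).
- exact: pcore_pgroup.
- apply: contra ntH => /eqP e; apply/eqP/trivgP.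
  by rewrite -e (rB_ge sHG pH).
Qed.

Lemma TT_rB H : H \subset G -> p.-group H -> TT (rB H) = TT H.
Proof.
move=> sHG pH; rewrite /TT; apply: eq_bigl => P.
case sylP: (P \in 'Syl_p(G)) => //=; rewrite inE in sylP.
apply/idP/idP => [sRP | sHP].
  exact: subset_trans (rB_ge sHG pH) sRP.
by rewrite /= rT // TT_sub.
Qed.

Lemma rB_Bp H : H \in Sp p G -> rB H \in Bp p G.
Proof.
move=> SH; rewrite BpE rB_Sp //=; have SR := rB_Sp SH.
case/SpP: SH => sHG pH _; case/SpP: SR => sRG pR _.
by rewrite (rT sRG pR) TT_rB // -rT.
Qed.

Lemma rB_fix H : H \in Bp p G -> rB H = H.
Proof. by rewrite BpE => /andP[_ /eqP e]; apply: val_inj; rewrite /= -e. Qed.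

Lemma rB_mono H K : H \in Sp p G -> K \in Sp p G -> H \subset K -> rB H \subset rB K.
Proof.
case/SpP => sHG pH _; case/SpP => sKG pK _ sHK.
rewrite /= (rT sHG pH) (rT sKG pK).
apply/bigcapsP => P /andP[sylP sKP]; rewrite inE in sylP.
exact: TT_sub sylP (subset_trans sHK sKP).
Qed.

Variable P0 : {group gT}.
Hypothesis sylP0 : p.-Sylow(G) P0.
Hypothesis ntP0 : P0 :!=: 1.

Lemma P0Bp : P0 \in Bp p G.
Proof.
have SP := P0Sp sylP0 ntP0.
have e : rB P0 = P0.
  apply: val_inj; apply/eqP; rewrite eqEsubset; apply/andP; split.
    by case/SpP: SP => sG pP _; rewrite /= rT // TT_sub.
  by case/SpP: SP => sG pP _; exact: rB_ge.
by rewrite -e rB_Bp.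
Qed.

Lemma Yex_B c : c \in chains (Bp p G) -> exists2 M, M \in Mset G P0 & below c M.
Proof.
move=> cB; have [K Kc bK] := chain_max cB.
have := cB; rewrite inE => /and3P[_ /subsetP cBp _].
have /BpSp/SpP[sKG pK _] := cBp _ Kc.
have [g Gg sKP] := Sylow_subJ sylP0 sKG pK.
exists (P0 :^ g)%G; first by apply/imsetP; exists g.
apply/forall_inP => H Hc; have /forall_inP := bK; move/(_ _ Hc) => sHK.
exact: subset_trans sHK sKP.
Qed.

Lemma Mset_Syl M : M \in Mset G P0 -> p.-Sylow(G) M.
Proof. by case/imsetP => g Gg ->; rewrite pHallJ. Qed.

Lemma Yfus_B c M1 M2 : c \in chains (Bp p G) -> M1 \in Mset G P0 -> M2 \in Mset G P0 ->
  below c M1 -> below c M2 ->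
  exists2 y, y \in G & conj_chain c y = c /\ (M1 :^ y)%G = M2.
Proof.
move=> cB M1M M2M b1 b2.
pose A := \bigcup_(H in c) H.
pose C := 'C_G(A).
have sylC M : M \in Mset G P0 -> below c M -> p.-Sylow(C) M.
  move=> MM bM; have sylM := Mset_Syl MM.
  apply: (pHall_subl _ (subsetIl _ _) sylM).
  rewrite subsetI (pHall_sub sylM) sub_abelian_cent //.
    by apply: abS; rewrite inE.
  exact: below_bigcup.
have [y Cy eM] := Sylow_trans (sylC _ M1M b1) (sylC _ M2M b2).
exists y; first by case/setIP: Cy.
split; first by apply: chain_centralized; case/setIP: Cy.
by apply: val_inj; rewrite /= eM.
Qed.

Lemma Bp_contractible : contractible (orbit_space G (Bp p G)).
Proof. exact: (addM_contractible (@Bp_J _ G p) P0Bp Yex_B Yfus_B). Qed.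

End AbelianSyl.
Section SpSdr.
Local Open Scope group_scope.
Variables (gT : finGroupType) (G : {group gT}) (p : nat).
Local Notation SS := (finspace (@sub_le gT) (Sp p G)).

Definition SSmk (H : {group gT}) (h : H \in Sp p G) : SS :=
  exist (fun H => H \in Sp p G) H h.

Lemma sub_le_refl : forall x : {group gT}, x \in Sp p G -> sub_le x x.
Proof. by move=> x _; rewrite /sub_le subxx. Qed.

Lemma sub_le_trans : forall x y z : {group gT}, x \in Sp p G -> y \in Sp p G ->
  z \in Sp p G -> sub_le x y -> sub_le y z -> sub_le x z.
Proof. by move=> x y z _ _ _; rewrite /sub_le; exact: fintype.subset_trans. Qed.

Variables (Y : {set {group gT}}) (r : {group gT} -> {group gT}).
Hypothesis rSp : forall H, H \in Sp p G -> r H \in Sp p G.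
Hypothesis rY : forall H, H \in Sp p G -> r H \in Y.
Hypothesis rfix : forall H, H \in Sp p G -> H \in Y -> r H = H.
Hypothesis rmono : forall H K, H \in Sp p G -> K \in Sp p G -> H \subset K -> r H \subset r K.

Definition rr (x : SS) : SS := SSmk (rSp (valP x)).

Lemma rr_mono (x y : SS) : sub_le (val x) (val y) -> sub_le (val (rr x)) (val (rr y)).
Proof. by rewrite /sub_le /=; apply: rmono; exact: valP. Qed.

Lemma rr_fix (a : SS) : in_space p G Y a -> rr a = a.
Proof. by move=> Ya; apply: val_inj; rewrite /= rfix //; exact: valP. Qed.

Lemma sdr_down : (forall H, H \in Sp p G -> r H \subset H) ->
  strong_deformation_retract (in_space p G Y).
Proof.
move=> rle.
pose f (i : nat) (x : SS) := if (i <= 1)%nat then x else rr x.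
apply: (@fence_sdr _ _ _ sub_le_refl sub_le_trans 1 f).
- by move=> [|[|i]] x y lxy //=; exact: rr_mono.
- move=> [|j] x // _; split; rewrite /f /=; first by rewrite /sub_le subxx.
  by rewrite /sub_le /=; apply: rle; exact: valP.
- by [].
- by move=> [|[|i]] a Aa //=; rewrite /f /= rr_fix.
- by move=> x; rewrite /f /=; apply: rY; exact: valP.
Qed.

Lemma sdr_up : (forall H, H \in Sp p G -> H \subset r H) ->
  strong_deformation_retract (in_space p G Y).
Proof.
move=> rge.
pose f (i : nat) (x : SS) := if (i == 0)%nat then x else rr x.
apply: (@fence_sdr _ _ _ sub_le_refl sub_le_trans 1 f).
- by move=> [|i] x y lxy //=; exact: rr_mono.
- move=> [|j] x // _; split; rewrite /f /=.
    by rewrite /sub_le /=; apply: rge; exact: valP.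
  by rewrite /sub_le subxx.
- by [].
- by move=> [|i] a Aa //=; rewrite /f /= rr_fix.
- by move=> x; rewrite /f /=; apply: rY; exact: valP.
Qed.

End SpSdr.

Section Extract.
Local Open Scope group_scope.
Variables (gT : finGroupType) (G : {group gT}) (p : nat).
Hypothesis pr_p : prime p.
Hypothesis p_dvd : (p %| #|G|)%nat.

Lemma Syl_nt (P : {group gT}) : p.-Sylow(G) P -> P :!=: 1.
Proof.
move=> sylP; have [x Gx ox] := Cauchy pr_p p_dvd.
have px : p.-group <[x]> by rewrite /pgroup -orderE ox pnat_id.
have sxG : <[x]> \subset G by rewrite cycle_subG.
have [g Gg sxP] := Sylow_subJ sylP sxG px.
apply/negP => /eqP P1; move: sxP; rewrite P1 conjs1g subG1 cycle_eq1 => /eqP x1.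
by move: ox pr_p; rewrite x1 order1 => <-.
Qed.

Lemma sdr_K : strong_deformation_retract (in_space p G (Ap p G)) ->
  forall P : {group gT}, P \in 'Syl_p(G) -> p.-abelem 'Ohm_1(P).
Proof.
move=> [H [hc h0 h1 hfix]] P; rewrite inE => sylP.
have SP : P \in Sp p G.
  by apply/SpP; split; [exact: pHall_sub sylP | exact: pHall_pgroup sylP | exact: Syl_nt].
pose xP := SSmk SP.
have AE : val (H (xP, 1%R)) \in Ap p G := h1 xP.
case/ApP: AE => sEG aE _.
apply: abelemS aE; change ('Ohm_1(P) \subset val (H (xP, 1%R))).
rewrite (OhmE 1%nat (pHall_pgroup sylP)) gen_subG.
apply/subsetP => y; rewrite !inE expn1 => /andP[yP yp].
case y1: (y == 1); first by rewrite (eqP y1) group1.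
have Ay : <[y]>%G \in Ap p G.
  apply/ApP; split.
  - by rewrite cycle_subG; apply: (subsetP (pHall_sub sylP)).
  - by rewrite cycle_abelem ?pr_p ?orbT // order_dvdn.
  - by rewrite /= cycle_eq1 y1.
pose xy := SSmk (ApSp Ay).
have fx : H (xy, 1%R) = xy.
  apply: hfix; first exact: Ay.
  exact: unit_itv1.
have := cont_mono (@sub_le_refl gT G p) (@sub_le_trans gT G p) hc (x := xy) (y := xP).
rewrite fx /sub_le /= => h; rewrite -cycle_subG; apply: h.
by rewrite cycle_subG.
Qed.

End Extract.

Theorem proposition5p1 (gT : finGroupType) (G : {group gT}) (p : nat)
  (p_prime : prime p) (p_dvd : (p %| #|G|)%N) :
  [/\ (strong_deformation_retract (in_space p G (Ap p G)) ->
         contractible (orbit_space G (Ap p G)) /\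
         contractible (orbit_space G (Sp p G))),
      ((forall P : {group gT}, (P \in 'Syl_p(G))%g -> abelian P) ->
         strong_deformation_retract (in_space p G (Ap p G)))
    & ((forall P : {group gT}, (P \in 'Syl_p(G))%g -> abelian P) ->
         strong_deformation_retract (in_space p G (Bp p G)) /\
         contractible (orbit_space G (Bp p G)))].
Proof.
have [P0 sylP0] := Sylow_exists p G.
have ntP0 := Syl_nt p_prime p_dvd sylP0.
split.
- move=> hsdr; have Kp := sdr_K p_prime p_dvd hsdr.
  split; [exact: (Ap_contractible Kp sylP0 ntP0) | exact: (Sp_contractible Kp sylP0 ntP0)].
- move=> abS; have Kp := Kp_ab abS.
  apply: (@sdr_down _ G p (Ap p G) (fun H => ('Ohm_1(H))%G)).
  + by move=> H SH; apply: ApSp; exact: (Ohm_Ap Kp).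
  + by move=> H SH; exact: (Ohm_Ap Kp).
  + by move=> H _ /ApP[_ aH _]; apply: val_inj; rewrite /= (Ohm1_id aH).
  + by move=> H K _ _ sHK; exact: OhmS.
  + by move=> H _; exact: Ohm_sub.
- move=> abS; split; last exact: (Bp_contractible abS sylP0 ntP0).
  apply: (@sdr_up _ G p (Bp p G) (rB G p)).
  + exact: rB_Sp.
  + exact: rB_Bp.
  + by move=> H _ BH; exact: rB_fix.
  + exact: rB_mono.
  + by move=> H /SpP[sHG pH _]; exact: rB_ge.
Qed.
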